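(* Let $D$ be a strong nonseparable digraph and let $(D_0,D_1,\ldots,D_k)$ be an ear decomposition of $D$. Let $i\in\{0,\ldots,k-1\}$ and let $P_i=(x_0,x_1,\ldots,x_{r-1},x_r)$ be the ear of $D_i$ in $D$ (so $D_{i+1}=D_i\cup P_i$), with $l(P_i)\geq 2$. If $D_i$ has a kernel $N$ but $D_{i+1}$ has no kernel, then one of the following holds: (1) $x_0,x_r\in N$ and $l(P_i)$ is odd; (2) $x_0\in N$, $x_r\notin N$ and $l(P_i)$ is even.
   Context: All digraphs are finite, without loops or multiple arcs. Paths and cycles are directed; the length $l(P)$ of a path $P$ is its number of arcs. A digraph is strong if for every ordered pair of vertices $x,y$ there is a directed path from $x$ to $y$; it is nonseparable if its underlying undirected graph is nonseparable (has no cut vertex). For a subdigraph $H$ of $D$, an ear of $H$ in $D$ is a directed path $(x_0,\ldots,x_r)$ in $D$ whose end vertices lie in $H$ and whose internal vertices do not lie in $H$. An ear decomposition of a nonseparable strong digraph $D$ is a sequence $(D_0,\ldots,D_k)$ of nonseparable strong subdigraphs of $D$ such that $D_0$ is a directed cycle, $D_{j+1}=D_j\cup P_j$ with $P_j$ an ear of $D_j$ in $D$ for each $j\in\{0,\ldots,k-1\}$, and $D_k=D$. A kernel of a digraph is a set $N$ of vertices that is independent (no arc between two of its vertices) and absorbent (every vertex not in $N$ has an out-neighbour in $N$). *)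

(* Defs.v *)
From mathcomp Require Import all_boot.
Set Implicit Arguments. Unset Strict Implicit. Unset Printing Implicit Defensive.

(* A digraph on a finite vertex type V is given by its arc relation E : rel V
   (irreflexive: no loops; a relation: no multiple arcs).
   A (sub)digraph is represented by a pair (vertex set, arc set). *)
Definition digraph (V : finType) := ({set V} * {set V * V})%type.

Section Digraphs.
Variable V : finType.

Definition whole (E : rel V) : digraph V := ([set: V], [set a | E a.1 a.2]).

Definition verts (H : digraph V) := H.1.
Definition arcs (H : digraph V) := H.2.

Definition subdigraph (E : rel V) (H : digraph V) : Prop :=
  forall a, a \in arcs H -> [/\ E a.1 a.2, a.1 \in verts H & a.2 \in verts H].

Definition darc (H : digraph V) : rel V := fun x y => (x, y) \in arcs H.

Definition strong (H : digraph V) : Prop :=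
  forall x y, x \in verts H -> y \in verts H -> connect (darc H) x y.

Definition uarc_in (H : digraph V) (S : {set V}) : rel V :=
  fun x y => [&& x \in S, y \in S & ((x, y) \in arcs H) || ((y, x) \in arcs H)].

Definition uconnected_in (H : digraph V) (S : {set V}) : Prop :=
  forall x y, x \in S -> y \in S -> connect (uarc_in H S) x y.

Definition nonseparable (H : digraph V) : Prop :=
  uconnected_in H (verts H) /\
  forall v, v \in verts H -> uconnected_in H (verts H :\ v).

(* H is a directed cycle: vertex sequence c (no repetition, >= 2 vertices,
   since there are no loops) with arcs c_j -> c_{j+1} cyclically *)
Definition is_dicycle (H : digraph V) : Prop :=
  exists c : seq V, [/\ uniq c, 2 <= size c,
    verts H = [set x | x \in c] &
    arcs H = [set a | (a.1 \in c) && (a.2 == next c a.1)]].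

Definition path_arcs (x0 : V) (xs : seq V) : seq (V * V) := zip (x0 :: xs) xs.

(* (x0 :: xs) is an ear of H in the digraph (V,E): a directed path of D
   (distinct vertices) whose end vertices lie in H and whose internal
   vertices do not lie in H *)
Definition is_ear (E : rel V) (H : digraph V) (x0 : V) (xs : seq V) : Prop :=
  [/\ uniq (x0 :: xs),
      all (fun a => E a.1 a.2) (path_arcs x0 xs),
      x0 \in verts H, last x0 xs \in verts H &
      forall y, y \in belast x0 xs -> y != x0 -> y \notin verts H].

Definition add_ear (H : digraph V) (x0 : V) (xs : seq V) : digraph V :=
  (verts H :|: [set y | y \in x0 :: xs],
   arcs H :|: [set a | a \in path_arcs x0 xs]).

(* ear decomposition (D_0, ..., D_k) of (V,E) with ears P_j = x0 j :: xs j *)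
Definition ear_decomposition (E : rel V) (k : nat) (Ds : nat -> digraph V)
    (x0 : nat -> V) (xs : nat -> seq V) : Prop :=
  [/\ forall j, j <= k -> [/\ subdigraph E (Ds j), nonseparable (Ds j) & strong (Ds j)],
      is_dicycle (Ds 0),
      forall j, j < k -> is_ear E (Ds j) (x0 j) (xs j) /\
                        Ds j.+1 = add_ear (Ds j) (x0 j) (xs j) &
      Ds k = whole E].

Definition kernel (H : digraph V) (N : {set V}) : Prop :=
  [/\ N \subset verts H,
      forall x y, x \in N -> y \in N -> (x, y) \notin arcs H &
      forall x, x \in verts H -> x \notin N -> exists2 y, y \in N & (x, y) \in arcs H].

End Digraphs.

(* Main.v *)
Require Import Defs.
From mathcomp Require Import all_boot zify.
Set Implicit Arguments. Unset Strict Implicit. Unset Printing Implicit Defensive.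

Section Aux.
Variable V : finType.

Lemma zip_mem (d x : V) (s : seq V) u v :
  (u, v) \in zip (x :: s) s ->
  exists2 j, j < size s & u = nth d (x :: s) j /\ v = nth d (x :: s) j.+1.
Proof.
elim: s x => [|y s IH] x //=.
rewrite inE => /orP [/eqP [-> ->] | /IH [j js [-> ->]]].
  by exists 0.
by exists j.+1.
Qed.

Lemma zip_nth (d x : V) (s : seq V) j : j < size s ->
  (nth d (x :: s) j, nth d (x :: s) j.+1) \in zip (x :: s) s.
Proof.
elim: s x j => [|y s IH] x [|j] //= js.
  by rewrite inE eqxx.
by rewrite inE IH ?orbT.
Qed.

Lemma key (E : rel V) (H : digraph V) (a : V) (s : seq V) (N : {set V}) :
  subdigraph E H -> is_ear E H a s -> 2 <= size s -> kernel H N ->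
  ~ (exists N' : {set V}, kernel (add_ear H a s) N') ->
  (a \in N /\ last a s \in N /\ odd (size s)) \/
  (a \in N /\ last a s \notin N /\ ~~ odd (size s)).
Proof.
rewrite /subdigraph /is_ear /kernel /add_ear /verts /arcs /path_arcs /=.
move=> Hsub [Hu _ Ha Hl Hint] hlen [hNs hNi hNa] hno.
set r := size s. set b := last a s \in N. set p := a :: s.
have sp : size p = r.+1 by [].
have Fidx : forall j, j <= r -> index (nth a p j) p = j.
  by move=> j jr; rewrite index_uniq // sp ltnS.
have Fp : forall y, y \in p -> exists2 j, j <= r & y = nth a p j.
  move=> y yp; exists (index y p); last by rewrite nth_index.
  by rewrite -ltnS -sp index_mem.
have Fr : nth a p r = last a s.
  by rewrite -[r]/((size p).-1) nth_last.
have Fint : forall j, 0 < j < r -> nth a p j \notin H.1.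
  move=> j /andP [j0 jr]; apply: Hint.
    rewrite /p lastI nth_rcons size_belast -/r jr; apply: mem_nth.
    by rewrite size_belast.
  rewrite -[a]/(nth a p 0) nth_uniq // ?sp //; first by rewrite -lt0n.
  by rewrite ltnW.
have Hbad : (a \in N) && addb b (odd r.-1).
  apply/negPn/negP => nb; apply: hno.
  pose inN y := if y \in H.1 then y \in N
                else (y \in p) && addb b (odd (r - index y p)).
  have inNint : forall j, 0 < j < r -> inN (nth a p j) = addb b (odd (r - j)).
    move=> j jr; rewrite /inN (negbTE (Fint j jr)) mem_nth ?sp; last first.
      by case/andP: jr => _ /ltnW; rewrite ltnS.
    by rewrite Fidx //; case/andP: jr => _ /ltnW.
  have inNH : forall y, y \in H.1 -> inN y = (y \in N).
    by move=> y yH; rewrite /inN yH.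
  exists [set y | inN y]; split.
  - apply/subsetP => y; rewrite in_set /inN in_setU; case: ifP => yH; first by [].
    by case/andP => yp _; rewrite in_set yp orbT.
  - move=> x y; rewrite !inE => xN yN; apply/negP => /orP [xyH | xyP].
      have [_ xH yH] := Hsub _ xyH.
      rewrite inNH // in xN; rewrite inNH // in yN.
      by move: (hNi _ _ xN yN); rewrite xyH.
    have [j jr [ex ey]] := zip_mem a xyP.
    move: xN yN; rewrite ex ey.
    case: j jr {ex ey xyP} => [|j] jr.
      have -> : inN (nth a p 0) = (a \in N) by rewrite inNH.
      rewrite (inNint 1) //.
      by move=> aN; rewrite subn1 => bb; move: nb; rewrite aN bb.
    rewrite inNint; last by rewrite jr.
    case: (ltngtP j.+2 r) => [jr2 | | jr2].
    + rewrite inNint ?jr2 // => h1 h2; move: h1 h2.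
      have -> : r - j.+1 = (r - j.+2).+1 by lia.
      by rewrite /=; case: (b); case: (odd _).
    + by rewrite ltnNge jr.
    + rewrite jr2 Fr inNH // -/b => h1 h2; move: h1.
      have -> : r - j.+1 = 1 by lia.
      by rewrite /= h2.
  - move=> x; rewrite !inE => xV xN.
    case xH: (x \in H.1).
      rewrite inNH // in xN.
      have [y yN xy] := hNa x xH xN.
      exists y; last by rewrite in_setU xy.
      by rewrite inE inNH // (subsetP hNs).
    move: xV; rewrite xH /= => xp.
    have [j jr ej] := Fp x xp.
    case: j jr ej => [|j] jr ej; first by move: xH; rewrite ej Ha.
    have jr' : j.+1 < r.
      rewrite ltn_neqAle jr andbT; apply/negP => /eqP jr2.
      by move: xH; rewrite ej jr2 Fr Hl.
    have jj : 0 < j.+1 < r by [].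
    move: xN; rewrite ej ?inE inNint // => xN.
    exists (nth a p j.+2); last by rewrite in_setU in_set zip_nth ?orbT.
    rewrite inE.
    case: (ltngtP j.+2 r) => [jr2 | | jr2].
    + rewrite inNint ?jr2 //; move: xN.
      have -> : r - j.+1 = (r - j.+2).+1 by lia.
      by rewrite /=; case: (b); case: (odd _).
    + by rewrite ltnNge jr'.
    + rewrite jr2 Fr inNH //; move: xN.
      have -> : r - j.+1 = 1 by lia.
      by rewrite /= /b; case: (_ \in N).
move/andP: Hbad => [aN].
have ho : odd r = ~~ odd r.-1 by move: hlen; rewrite /r; case: (size s).
rewrite ho /b; case: (last a s \in N); case: (odd r.-1) => //= _; first [by left | by right].
Qed.

End Aux.

Theorem mainTheorem12 (V : finType) (E : rel V) (Eirr : irreflexive E)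
  (Dstrong : strong (whole E)) (Dnonsep : nonseparable (whole E))
  (k : nat) (Ds : nat -> digraph V) (x0 : nat -> V) (xs : nat -> seq V)
  (hdec : ear_decomposition E k Ds x0 xs)
  (i : nat) (hi : i < k) (hlen : 2 <= size (xs i))
  (N : {set V}) (hN : kernel (Ds i) N)
  (hno : ~ exists N' : {set V}, kernel (Ds i.+1) N') :
  (x0 i \in N /\ last (x0 i) (xs i) \in N /\ odd (size (xs i))) \/
  (x0 i \in N /\ last (x0 i) (xs i) \notin N /\ ~~ odd (size (xs i))).
Proof.
case: hdec => Hall _ Hears _.
have [Hear HD] := Hears i hi.
have [Hsub _ _] := Hall i (ltnW hi).
apply: (key Hsub Hear hlen hN); by rewrite -HD.
Qed.
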